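(* Let $\mathcal{H}\in\mathbb{R}_D^{[n_1,\ldots,n_m]}$. Then $\mathcal{H}$ is $\mathbb{R}$-separable if and only if $\mathcal{H}$ is $\mathbb{C}$-separable.
   Context: For vectors $v_i$, $[v_1,\ldots,v_m]_{\otimes h}:=v_1\otimes\cdots\otimes v_m\otimes\overline{v_1}\otimes\cdots\otimes\overline{v_m}$. $\mathbb{R}_D^{[n_1,\ldots,n_m]}$ is the set of real tensors of the form $\sum_i\lambda_i[u_i^1,\ldots,u_i^m]_{\otimes h}$ with $\lambda_i\in\mathbb{R}$ and $u_i^j\in\mathbb{R}^{n_j}$. A Hermitian tensor $\mathcal{H}$ is $\mathbb{C}$-separable if $\mathcal{H}=\sum_{i=1}^r[u_i^1,\ldots,u_i^m]_{\otimes h}$ for some $u_i^j\in\mathbb{C}^{n_j}$, and $\mathbb{R}$-separable if this holds with all $u_i^j\in\mathbb{R}^{n_j}$. *)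

(* Defs.v *)
From HB Require Import structures.
From mathcomp Require Import all_boot all_order all_algebra.
From mathcomp Require Import reals.
From mathcomp Require Import complex.
Set Implicit Arguments. Unset Strict Implicit. Unset Printing Implicit Defensive.
Import Order.TTheory GRing.Theory Num.Theory.
Local Open Scope ring_scope.

Definition midx (m : nat) (n : 'I_m -> nat) := forall j : 'I_m, 'I_(n j).

Definition vfam (K : Type) (m : nat) (n : 'I_m -> nat) :=
  forall j : 'I_m, 'I_(n j) -> K.

(* A tensor in K^{n_1 x ... x n_m x n_1 x ... x n_m}, indexed by (i, i'). *)
Definition htensor (K : Type) (m : nat) (n : 'I_m -> nat) :=
  midx n -> midx n -> K.

Definition hrank1C (R : rcfType) (m : nat) (n : 'I_m -> nat)
  (u : vfam R[i] n) : htensor R[i] n :=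
  fun i i' => (\prod_(j < m) u j (i j)) * (\prod_(j < m) conjc (u j (i' j))).

(* [u^1,...,u^m]_{(x)h} for real vectors (conjugation is the identity). *)
Definition hrank1R (R : rcfType) (m : nat) (n : 'I_m -> nat)
  (u : vfam R n) : htensor R n :=
  fun i i' => (\prod_(j < m) u j (i j)) * (\prod_(j < m) u j (i' j)).

Definition in_RD (R : rcfType) (m : nat) (n : 'I_m -> nat) (H : htensor R n) :=
  exists (r : nat) (lam : 'I_r -> R) (u : 'I_r -> vfam R n),
    forall i i', H i i' = \sum_(k < r) lam k * hrank1R (u k) i i'.

Definition R_separable (R : rcfType) (m : nat) (n : 'I_m -> nat) (H : htensor R n) :=
  exists (r : nat) (u : 'I_r -> vfam R n),
    forall i i', H i i' = \sum_(k < r) hrank1R (u k) i i'.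

Definition C_separable (R : rcfType) (m : nat) (n : 'I_m -> nat) (H : htensor R n) :=
  exists (r : nat) (u : 'I_r -> vfam R[i] n),
    forall i i', real_complex R (H i i') = \sum_(k < r) hrank1C (u k) i i'.

(* Main.v *)
Require Import Defs.
From HB Require Import structures.
From mathcomp Require Import all_boot all_order all_algebra.
From mathcomp Require Import reals.
From mathcomp Require Import complex.
From mathcomp Require Import ring.
Import Order.TTheory GRing.Theory Num.Theory.
Local Open Scope ring_scope.

Lemma key (R : rcfType) (z w : R[i]) :
  z * conjc w + w * conjc z = real_complex R (2 * (complex.Re z * complex.Re w + complex.Im z * complex.Im w)).
Proof. case: z => a b; case: w => c d. rewrite /= .
apply/eqP; rewrite eq_complex /=. apply/andP; split; apply/eqP; ring. Qed.

Lemma flatten_sep (R : rcfType) (m : nat) (n : 'I_m -> nat) (H : htensor R n)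
  (T : finType) (v : T -> vfam R n) :
  (forall i i', H i i' = \sum_(t : T) hrank1R (v t) i i') -> R_separable H.
Proof.
move=> hv; exists #|T|, (fun k => v (enum_val k)) => i i'.
by rewrite hv (big_enum_val (A := T)).
Qed.

Lemma R_to_C (R : rcfType) (m : nat) (n : 'I_m -> nat) (H : htensor R n) :
  R_separable H -> C_separable H.
Proof.
case=> r [u hu]; exists r, (fun k j x => real_complex R (u k j x)) => i i'.
rewrite hu rmorph_sum; apply: eq_bigr => k _.
rewrite /hrank1R /hrank1C rmorphM !rmorph_prod; congr (_ * _).
by apply: eq_bigr => j _; rewrite conjc_real.
Qed.

Definition sw1 {m} {n : 'I_m -> nat} (S : {ffun 'I_m -> bool}) (i i' : midx n) : midx n :=
  fun j => if S j then i' j else i j.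
Definition sw2 {m} {n : 'I_m -> nat} (S : {ffun 'I_m -> bool}) (i i' : midx n) : midx n :=
  fun j => if S j then i j else i' j.

Lemma RD_swap (R : rcfType) (m : nat) (n : 'I_m -> nat) (H : htensor R n) :
  in_RD H -> forall S i i', H (sw1 S i i') (sw2 S i i') = H i i'.
Proof.
case=> r [lam [u hu]] S i i'; rewrite !hu; apply: eq_bigr => k _; congr (_ * _).
rewrite /hrank1R -!big_split; apply: eq_bigr => j _ /=.
by rewrite /sw1 /sw2; case: (S j) => //; apply: mulrC.
Qed.

Lemma C_to_R (R : rcfType) (m : nat) (n : 'I_m -> nat) (H : htensor R n) :
  in_RD H -> C_separable H -> R_separable H.
Proof.
move=> HD [r [u hu]].
pose a k j x := complex.Re (u k j x).
pose b k j x := complex.Im (u k j x).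
pose v (t : 'I_r * {ffun 'I_m -> bool}) : vfam R n :=
  fun j x => if t.2 j then b t.1 j x else a t.1 j x.
apply: (@flatten_sep _ _ _ _ _ v) => i i'.
pose P k := \prod_(j < m) (a k j (i j) * a k j (i' j) + b k j (i j) * b k j (i' j)).
have step1 k : \sum_(c : {ffun 'I_m -> bool}) hrank1R (v (k, c)) i i' = P k.
  transitivity (\prod_(j < m) \sum_(c : bool)
     (if c then b k j (i j) * b k j (i' j) else a k j (i j) * a k j (i' j))).
    rewrite bigA_distr_bigA; apply: eq_bigr => c _.
    rewrite /hrank1R -big_split; apply: eq_bigr => j _ /=.
    by rewrite /v /=; case: (c j).
  by apply: eq_bigr => j _; rewrite big_bool /= addrC.
rewrite (eq_bigr (fun p => hrank1R (v (p.1, p.2)) i i')); last by case.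
rewrite -(pair_bigA _ (fun k c => hrank1R (v (k, c)) i i')) /=.
under [RHS]eq_bigr do rewrite step1.
apply: (@complexI R).
have h2 : (2 ^+ m : R[i]) != 0 by rewrite expf_eq0 pnatr_eq0 andbF.
apply: (mulfI h2).
have e1 : 2 ^+ m * real_complex R (H i i') =
   \sum_(S : {ffun 'I_m -> bool}) real_complex R (H (sw1 S i i') (sw2 S i i')).
  under eq_bigr do rewrite (@RD_swap _ _ _ _ HD).
  by rewrite sumr_const card_ffun card_bool card_ord -[RHS]mulr_natl natrX.
rewrite e1.
rewrite (eq_bigr (fun S => \sum_(k < r) hrank1C (u k) (sw1 S i i') (sw2 S i i'))); last first.
  by move=> S _; rewrite -hu.
rewrite exchange_big /= rmorph_sum mulr_sumr; apply: eq_bigr => k _.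
transitivity (\prod_(j < m) \sum_(c : bool)
   (if c then u k j (i' j) * conjc (u k j (i j)) else u k j (i j) * conjc (u k j (i' j)))).
  rewrite bigA_distr_bigA; apply: eq_bigr => S _.
  rewrite /hrank1C -big_split; apply: eq_bigr => j _ /=.
  by rewrite /sw1 /sw2; case: (S j).
rewrite /P rmorph_prod -[in 2 ^+ m](card_ord m) -prodr_const -big_split.
apply: eq_bigr => j _; rewrite big_bool /= addrC key rmorphM /=.

by rewrite rmorph_nat.
Qed.

Theorem lemma6p2 (R : realType) (m : nat) (n : 'I_m -> nat) (H : htensor R n) :
  in_RD H -> (R_separable H <-> C_separable H).
Proof.
move=> HD; split; [exact: R_to_C | exact: C_to_R].
Qed.
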